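(* Let $\psi(x,y)=\binom{x}{y}$. For every $L\in\mathcal F_x(\psi)$ there is a unique difference operator $R(y,\delta_y)$ with $L\cdot\psi=R\cdot\psi$, and the resulting map $b_\psi:\mathcal F_x(\psi)\to\mathcal F_y(\psi)$, $b_\psi(L)=R$, is a well-defined bijective linear map satisfying $b_\psi(L_1L_2)=b_\psi(L_2)b_\psi(L_1)$ for all $L_1,L_2\in\mathcal F_x(\psi)$; i.e. $b_\psi$ is an algebra anti-isomorphism.
   Context: $\mathbb N=\{0,1,2,\dots\}$; functions on $\mathbb N$ are extended by $0$ to negative arguments. Shifts: $(\delta_x f)(x)=f(x+1)$, $(\delta_x^* f)(x)=f(x-1)$. A difference operator in $x$ is a finite expression $L=\sum_{k=0}^n a_k(x)\delta_x^k+\sum_{k=1}^n a_{-k}(x)(\delta_x^k)^*$ with $a_k:\mathbb N\to\mathbb R$, acting by $(L f)(x)=\sum_{k=-n}^n a_k(x)f(x+k)$; these form an algebra under composition; similarly in $y$. Operators in $x$ act on $\psi(x,y)$ for fixed $y$, operators in $y$ for fixed $x$. The left and right Fourier algebras are $\mathcal F_x(\psi)=\{L(x,\delta_x):\ L\cdot\psi=R\cdot\psi \text{ for some difference operator } R(y,\delta_y)\}$ and $\mathcal F_y(\psi)=\{R(y,\delta_y):\ L\cdot\psi=R\cdot\psi\text{ for some difference operator } L(x,\delta_x)\}$. *)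

(* Defs.v *)
From mathcomp Require Import all_boot all_order all_algebra.
From mathcomp Require Import reals.
Set Implicit Arguments. Unset Strict Implicit. Unset Printing Implicit Defensive.
Import Order.TTheory GRing.Theory Num.Theory.
Local Open Scope ring_scope.

Definition fext (R : realType) (f : nat -> R) (z : int) : R :=
  match z with Posz m => f m | Negz _ => 0 end.

Definition op (R : realType) := (nat -> R) -> (nat -> R).

(* T is a difference operator: T f (x) = sum_{k=-n}^{n} a_k(x) f(x+k)
   (with f extended by 0 to negative arguments).  Operators are identified
   with their action on functions N -> R. *)
Definition is_diffop (R : realType) (T : op R) : Prop :=
  exists (n : nat) (a : int -> nat -> R),
    forall (f : nat -> R) (x : nat),
      T f x = \sum_(i < (2 * n).+1) a (i%:Z - n%:Z) x * fext f (x%:Z + i%:Z - n%:Z).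

(* operators in x act on psi(x,y) for fixed y; operators in y for fixed x *)
Definition actx (R : realType) (T : op R) (psi : nat -> nat -> R) : nat -> nat -> R :=
  fun x y => T (fun x' => psi x' y) x.
Definition acty (R : realType) (S : op R) (psi : nat -> nat -> R) : nat -> nat -> R :=
  fun x y => S (psi x) y.

Definition Fx (R : realType) (psi : nat -> nat -> R) (L : op R) : Prop :=
  is_diffop L /\ exists S : op R, is_diffop S /\ actx L psi = acty S psi.
Definition Fy (R : realType) (psi : nat -> nat -> R) (S : op R) : Prop :=
  is_diffop S /\ exists L : op R, is_diffop L /\ actx L psi = acty S psi.

Definition op_add (R : realType) (T1 T2 : op R) : op R := fun f x => T1 f x + T2 f x.
Definition op_scale (R : realType) (c : R) (T : op R) : op R := fun f x => c * T f x.
Definition op_mul (R : realType) (T1 T2 : op R) : op R := fun f => T1 (T2 f).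

Definition binom_psi (R : realType) : nat -> nat -> R := fun x y => ('C(x, y))%:R.

(* Main.v *)
Require Import Defs.
From mathcomp Require Import all_boot all_order all_algebra.
From mathcomp Require Import reals.
From mathcomp Require Import zify.
From Stdlib Require Import FunctionalExtensionality ClassicalEpsilon.
Set Implicit Arguments. Unset Strict Implicit. Unset Printing Implicit Defensive.
Import Order.TTheory GRing.Theory Num.Theory.
Local Open Scope ring_scope.

Definition delta (R : realType) (w : nat) : nat -> R := fun z => (z == w)%:R.

Definition LL (R : realType) (T : op R) (n : nat) : Prop :=
  (forall f g x, (forall z, (x <= z + n)%N -> (z <= x + n)%N -> f z = g z) -> T f x = T g x) /\
  (forall (N : nat) (c : nat -> R) (g : nat -> nat -> R) x,
      T (fun z => \sum_(j < N) c j * g j z) x = \sum_(j < N) c j * T (g j) x).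

Lemma LL_expand (R : realType) (T : op R) n (f : nat -> R) x N (c : nat -> R) (g : nat -> nat -> R) :
  LL T n -> (forall z, (z <= x + n)%N -> f z = \sum_(j < N) c j * g j z) ->
  T f x = \sum_(j < N) c j * T (g j) x.
Proof. move=> [loc lin] H; rewrite -(lin N c g x); apply: loc => z _ hz; exact: H. Qed.

Lemma LL_zero (R : realType) (T : op R) n x : LL T n -> T (fun _ => 0) x = 0.
Proof.
move=> [_ lin]; have := lin 0%N (fun _ => 0) (fun _ _ => 0) x.
by rewrite !big_ord0.
Qed.

Lemma sum_delta (R : realType) M (f : nat -> R) z :
  (z < M)%N -> \sum_(j < M) f j * delta R j z = f z.
Proof.
move=> hz; rewrite (bigD1 (Ordinal hz)) //= /delta eqxx mulr1 big1 ?addr0 //.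
move=> j hj; case: eqP => [E|_]; last by rewrite mulr0.
by exfalso; move: hj; apply/negP; rewrite negbK; apply/eqP/val_inj => /=.
Qed.

Lemma delta_zero (R : realType) (T : op R) n j x :
  LL T n -> (j + n < x)%N -> T (delta R j) x = 0.
Proof.
move=> hT hj; rewrite -(LL_zero x hT); case: hT => loc _; apply: loc => z h1 h2.
rewrite /delta; case: eqP => // E; lia.
Qed.

Lemma LL_delta_expand (R : realType) (T : op R) n f x M :
  LL T n -> (x + n < M)%N -> T f x = \sum_(j < M) f j * T (delta R j) x.
Proof.
move=> hT hM; apply: (LL_expand hT) => z hz; rewrite sum_delta //; lia.
Qed.

Lemma reindex (R : realType) (n x : nat) (Phi : nat -> R) :
  (forall j, (j + n < x)%N -> Phi j = 0) ->
  \sum_(i < (2 * n).+1) fext Phi (x%:Z + i%:Z - n%:Z) = \sum_(j < x + n + 1) Phi j.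
Proof.
move=> H.
rewrite -(big_mkord xpredT (fun i : nat => fext Phi (x%:Z + i%:Z - n%:Z))).
rewrite -(big_mkord xpredT Phi).
rewrite (@big_cat_nat _ _ _ (n - x)%N) //=; last by lia.
rewrite (@big_cat_nat _ _ _ (x - n)%N 0 (x + n + 1)%N) //=; last by lia.
rewrite [X in X + _]big_nat_cond [X in _ = X + _]big_nat_cond.
rewrite big1; last first.
  move=> i /andP [/andP [_ hi] _]; case E: (x%:Z + i%:Z - n%:Z) => [m|m] //; lia.
rewrite [X in _ = X + _]big1; last first.
  move=> i /andP [/andP [_ hi] _]; apply: H; lia.
rewrite !add0r.
rewrite -(add0n (n - x)%N) -(add0n (x - n)%N) !big_addn.
have -> : ((2 * n).+1 - (n - x) = x + n + 1 - (x - n))%N by lia.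
apply: eq_big_nat => i hi.
have -> : (x%:Z + (i + (n - x))%N%:Z - n%:Z) = Posz (i + (x - n))%N by lia.
by [].
Qed.

Lemma fext_sum (R : realType) N (c : nat -> R) (g : nat -> nat -> R) w :
  fext (fun z => \sum_(j < N) c j * g j z) w = \sum_(j < N) c j * fext (g j) w.
Proof. by case: w => [m|m] //=; rewrite big1 // => j _; rewrite mulr0. Qed.

Lemma diffop_LL (R : realType) (T : op R) : is_diffop T -> exists n, LL T n.
Proof.
move=> [n [a H]]; exists n; split.
  move=> f g x hfg; rewrite !H; apply: eq_bigr => i _; congr (_ * _).
  case E: (x%:Z + (nat_of_ord i)%:Z - n%:Z) => [m|m] //=.
  have hi := ltn_ord i.
  apply: hfg; lia.
move=> N c g x; rewrite H.
under eq_bigr => i _ do rewrite fext_sum mulr_sumr.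
rewrite exchange_big /=; apply: eq_bigr => j _; rewrite H mulr_sumr.
by apply: eq_bigr => i _; rewrite mulrCA.
Qed.

Lemma LL_diffop (R : realType) (T : op R) n : LL T n -> is_diffop T.
Proof.
move=> hT; exists n, (fun k x => fext (fun w => T (delta R w) x) (x%:Z + k)).
move=> f x; rewrite (@LL_delta_expand _ _ _ f x (x + n + 1)%N hT); last by lia.
rewrite -(@reindex _ n x (fun j => f j * T (delta R j) x)); last first.
  by move=> j hj; rewrite (delta_zero hT hj) mulr0.
apply: eq_bigr => i _; rewrite addrA.
by case: (x%:Z + (nat_of_ord i)%:Z - n%:Z) => [m|m] /=; rewrite ?mulr0 // mulrC.
Qed.

Lemma LL_add (R : realType) (T1 T2 : op R) n1 n2 :
  LL T1 n1 -> LL T2 n2 -> LL (op_add T1 T2) (maxn n1 n2).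
Proof.
move=> [l1 i1] [l2 i2]; split.
  move=> f g x h; rewrite /op_add; congr (_ + _); [apply: l1|apply: l2];
  move=> z ha hb; apply: h; lia.
move=> N c g x; rewrite /op_add (i1 N c g x) (i2 N c g x) -big_split /=.
by apply: eq_bigr => j _; rewrite mulrDr.
Qed.

Lemma LL_scale (R : realType) (c : R) (T : op R) n :
  LL T n -> LL (op_scale c T) n.
Proof.
move=> [l1 i1]; split.
  by move=> f g x h; rewrite /op_scale (l1 f g x h).
move=> N d g x; rewrite /op_scale (i1 N d g x) mulr_sumr.
by apply: eq_bigr => j _; rewrite mulrCA.
Qed.

Lemma LL_mul (R : realType) (T1 T2 : op R) n1 n2 :
  LL T1 n1 -> LL T2 n2 -> LL (op_mul T1 T2) (n1 + n2).
Proof.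
move=> [l1 i1] [l2 i2]; split.
  move=> f g x h; rewrite /op_mul; apply: l1 => z ha hb; apply: l2 => w hc hd.
  apply: h; lia.
move=> N c g x; rewrite /op_mul.
have -> : T2 (fun z => \sum_(j < N) c j * g j z) = fun z => \sum_(j < N) c j * T2 (g j) z.
  by apply: functional_extensionality => z; rewrite (i2 N c g z).
by rewrite (i1 N c (fun j => T2 (g j)) x).
Qed.

Lemma span1 (R : realType) (f : nat -> R) M :
  exists c : nat -> R, forall z, (z <= M)%N -> f z = \sum_(j < M.+1) c j * ('C(z, j))%:R.
Proof.
elim: M => [|M [c IH]].
  exists (fun _ => f 0%N) => z; rewrite leqn0 => /eqP ->.
  by rewrite big_ord_recr big_ord0 /= bin0 mulr1 add0r.
pose e := f M.+1 - \sum_(j < M.+1) c j * ('C(M.+1, j))%:R.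
exists (fun j => if j == M.+1 then e else c j) => z hz.
rewrite big_ord_recr /= eqxx.
under eq_bigr => j _ do rewrite (ltn_eqF (ltn_ord j)).
case: (ltngtP z M.+1) => hzM.
- by rewrite bin_small // mulr0 addr0 -IH.
- lia.
- by rewrite hzM binn mulr1 /e addrC subrK.
Qed.

Lemma span2 (R : realType) M : forall (f : nat -> R),
  exists c : nat -> R, forall z, (z <= M)%N -> f z = \sum_(j < M.+1) c j * ('C(j, z))%:R.
Proof.
elim: M => [|M IH] f.
  exists (fun _ => f 0%N) => z; rewrite leqn0 => /eqP ->.
  by rewrite big_ord_recr big_ord0 /= bin0 mulr1 add0r.
have [c Hc] := IH (fun z => f z - f M.+1 * ('C(M.+1, z))%:R).
exists (fun j => if j == M.+1 then f M.+1 else c j) => z hz.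
rewrite big_ord_recr /= eqxx.
under eq_bigr => j _ do rewrite (ltn_eqF (ltn_ord j)).
case: (ltngtP z M.+1) => hzM.
- by rewrite -Hc ?subrK //; lia.
- lia.
- rewrite hzM binn mulr1 big1 ?add0r // => j _.
  by rewrite bin_small ?mulr0 // ltnS.
Qed.

Lemma uniq_gen (R : realType) (T1 T2 : op R) n1 n2 (g : nat -> nat -> R) :
  LL T1 n1 -> LL T2 n2 ->
  (forall (f : nat -> R) M, exists N (c : nat -> R),
      forall z, (z <= M)%N -> f z = \sum_(j < N) c j * g j z) ->
  (forall j x, T1 (g j) x = T2 (g j) x) -> T1 = T2.
Proof.
move=> h1 h2 hs he; apply: functional_extensionality => f.
apply: functional_extensionality => x.
have [N [c Hc]] := hs f (x + maxn n1 n2)%N.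
rewrite (LL_expand h1 (N := N) (c := c) (g := g)); last by move=> z hz; apply: Hc; lia.
rewrite (LL_expand h2 (N := N) (c := c) (g := g)); last by move=> z hz; apply: Hc; lia.
by apply: eq_bigr => j _; rewrite he.
Qed.

Lemma commute (R : realType) (L S : op R) n1 n2 (Phi : nat -> nat -> R) x y :
  LL L n1 -> LL S n2 ->
  L (fun x' => S (Phi x') y) x = S (fun y' => L (fun x' => Phi x' y') x) y.
Proof.
move=> h1 h2.
rewrite (@LL_delta_expand _ S n2 _ y (y + n2 + 1)%N h2); last by lia.
rewrite (LL_expand h1 (N := (y + n2 + 1)%N) (c := fun j => S (delta R j) y)
   (g := fun j x' => Phi x' j)); last first.
  move=> z _; rewrite (@LL_delta_expand _ S n2 _ y (y + n2 + 1)%N h2); last by lia.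
  by apply: eq_bigr => j _; rewrite mulrC.
by apply: eq_bigr => j _; rewrite mulrC.
Qed.

Theorem mainTheorem2 (R : realType) :
  let psi := binom_psi R in
  (* uniqueness of R for every L in F_x(psi) *)
  (forall L : op R, Fx psi L ->
     exists! S : op R, is_diffop S /\ actx L psi = acty S psi) /\
  (* the map b_psi *)
  exists b : op R -> op R,
    (forall L, Fx psi L -> is_diffop (b L) /\ actx L psi = acty (b L) psi) /\
    (* bijection F_x(psi) -> F_y(psi) *)
    (forall L, Fx psi L -> Fy psi (b L)) /\
    (forall L1 L2, Fx psi L1 -> Fx psi L2 -> b L1 = b L2 -> L1 = L2) /\
    (forall S, Fy psi S -> exists L, Fx psi L /\ b L = S) /\
    (* linearity (F_x(psi) is closed under the operations) *)
    (forall L1 L2, Fx psi L1 -> Fx psi L2 ->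
       Fx psi (op_add L1 L2) /\ b (op_add L1 L2) = op_add (b L1) (b L2)) /\
    (forall (c : R) L, Fx psi L ->
       Fx psi (op_scale c L) /\ b (op_scale c L) = op_scale c (b L)) /\
    (* anti-multiplicativity *)
    (forall L1 L2, Fx psi L1 -> Fx psi L2 ->
       Fx psi (op_mul L1 L2) /\ b (op_mul L1 L2) = op_mul (b L2) (b L1)).
Proof.
move=> psi.
have spanx : forall (f : nat -> R) M, exists N (c : nat -> R),
    forall z, (z <= M)%N -> f z = \sum_(j < N) c j * (fun y x' => psi x' y) j z.
  by move=> f M; have [c Hc] := span1 f M; exists M.+1, c.
have spany : forall (f : nat -> R) M, exists N (c : nat -> R),
    forall z, (z <= M)%N -> f z = \sum_(j < N) c j * psi j z.
  by move=> f M; have [c Hc] := span2 M f; exists M.+1, c.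
have uniqS : forall S1 S2, is_diffop S1 -> is_diffop S2 ->
    acty S1 psi = acty S2 psi -> S1 = S2.
  move=> S1 S2 /diffop_LL [n1 h1] /diffop_LL [n2 h2] E.
  apply: (uniq_gen h1 h2 spany) => j x.
  exact: (congr1 (fun F => F j x) E).
have uniqL : forall L1 L2, is_diffop L1 -> is_diffop L2 ->
    actx L1 psi = actx L2 psi -> L1 = L2.
  move=> L1 L2 /diffop_LL [n1 h1] /diffop_LL [n2 h2] E.
  apply: (uniq_gen h1 h2 spanx) => j x.
  exact: (congr1 (fun F => F x j) E).
pose b := fun L : op R => epsilon (inhabits L)
            (fun S => is_diffop S /\ actx L psi = acty S psi).
have bspec : forall L, Fx psi L -> is_diffop (b L) /\ actx L psi = acty (b L) psi.
  by move=> L [_ ex]; exact: (epsilon_spec (inhabits L) _ ex).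
have beq : forall L S, Fx psi L -> is_diffop S -> actx L psi = acty S psi -> b L = S.
  move=> L S hL hS E; have [h1 h2] := bspec L hL.
  by apply: uniqS => //; rewrite -h2.
have pw : forall L, Fx psi L -> forall x y,
    L (fun x' => psi x' y) x = b L (psi x) y.
  by move=> L hL x y; have [_ e] := bspec L hL; exact: (congr1 (fun F => F x y) e).
split.
  move=> L [hL [S [hS E]]]; exists S; split => // S' [hS' E'].
  by apply: uniqS => //; rewrite -E E'.
exists b.
split; first exact: bspec.
split.
  move=> L hL; have [h1 h2] := bspec L hL; split => //; exists L; split => //.
  by case: hL.
split.
  move=> L1 L2 h1 h2 E; have [_ e1] := bspec _ h1; have [_ e2] := bspec _ h2.
  by apply: uniqL; [case: h1|case: h2|rewrite e1 e2 E].
split.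
  move=> S [hS [L [hL E]]]; have FL : Fx psi L by split => //; exists S.
  by exists L; split => //; apply: beq.
split.
  move=> L1 L2 h1 h2.
  have [d1 _] := bspec _ h1; have [d2 _] := bspec _ h2.
  have [n1 l1] := diffop_LL (proj1 h1); have [n2 l2] := diffop_LL (proj1 h2).
  have [m1 k1] := diffop_LL d1; have [m2 k2] := diffop_LL d2.
  have dS : is_diffop (op_add (b L1) (b L2)) by apply: LL_diffop (LL_add k1 k2).
  have E : actx (op_add L1 L2) psi = acty (op_add (b L1) (b L2)) psi.
    apply: functional_extensionality => x; apply: functional_extensionality => y.
    by rewrite /actx /acty /op_add (pw _ h1) (pw _ h2).
  have FL : Fx psi (op_add L1 L2).
    by split; [apply: LL_diffop (LL_add l1 l2)|exists (op_add (b L1) (b L2))].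
  by split => //; apply: beq.
split.
  move=> c L h1.
  have [d1 _] := bspec _ h1.
  have [n1 l1] := diffop_LL (proj1 h1); have [m1 k1] := diffop_LL d1.
  have dS : is_diffop (op_scale c (b L)) by apply: LL_diffop (LL_scale c k1).
  have E : actx (op_scale c L) psi = acty (op_scale c (b L)) psi.
    apply: functional_extensionality => x; apply: functional_extensionality => y.
    by rewrite /actx /acty /op_scale (pw _ h1).
  have FL : Fx psi (op_scale c L).
    by split; [apply: LL_diffop (LL_scale c l1)|exists (op_scale c (b L))].
  by split => //; apply: beq.
move=> L1 L2 h1 h2.
have [d1 _] := bspec _ h1; have [d2 _] := bspec _ h2.
have [n1 l1] := diffop_LL (proj1 h1); have [n2 l2] := diffop_LL (proj1 h2).
have [m1 k1] := diffop_LL d1; have [m2 k2] := diffop_LL d2.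
have dS : is_diffop (op_mul (b L2) (b L1)) by apply: LL_diffop (LL_mul k2 k1).
have E : actx (op_mul L1 L2) psi = acty (op_mul (b L2) (b L1)) psi.
  apply: functional_extensionality => x; apply: functional_extensionality => y.
  rewrite /actx /acty /op_mul.
  have -> : L2 (fun x' => psi x' y) = fun x'' => b L2 (psi x'') y.
    by apply: functional_extensionality => x''; apply: pw.
  rewrite (commute psi x y l1 k2); congr (b L2 _ y).
  by apply: functional_extensionality => y'; apply: pw.
have FL : Fx psi (op_mul L1 L2).
  by split; [apply: LL_diffop (LL_mul l1 l2)|exists (op_mul (b L2) (b L1))].
by split => //; apply: beq.
Qed.
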